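(* Let $\alpha>\frac12$ and run Algorithm 1 with $x_0=0$, gradients satisfying $\|g_t\|\le G$, and learning rates $\eta_t=\frac{1}{Gt^\alpha}$. Then for every $T\ge0$, $$S_T\le\sqrt{5+\tfrac{1}{2\alpha-1}},\qquad Q_T\le\ln\Big(5+\tfrac{1}{2\alpha-1}\Big),$$ and for every $T\ge1$ and $u\in\mathbb{R}^d$, $$\phi_T(u)\le\sqrt{5+\tfrac{1}{2\alpha-1}}\;\|u\|\Big[2\ln(1+2\|u\|)+9\sqrt{5+\tfrac{1}{2\alpha-1}}\Big].$$
   Context: $\|\cdot\|$ is the Euclidean norm, $G>0$. Auxiliary functions: $\psi^*(\theta,S,Q)=\exp\big(\max_{\beta\in[-1/2,1/2]}(\theta\beta-\beta^2S^2)-Q\big)$ for $\theta\in\mathbb{R},S>0,Q\ge0$; $\psi(x,S,Q)=\sup_{\theta\in\mathbb{R}}(\theta x-\psi^*(\theta,S,Q))$. Algorithm 1 with $x_0=0$: $S_0^2=4$, $Q_0=0$, $\theta_0=0$. For $t=1,2,\dots$: $\phi_t(x)=\psi(\|x\|,S_{t-1},Q_{t-1})$; $x_t$ is the unique minimizer of $\phi_t(x)-\langle\theta_{t-1},x\rangle$; receive $g_t$; $\ell_t=\eta_tg_t$, $S_t^2=S_{t-1}^2+\|\ell_t\|^2$ ($S_t>0$), $Q_t=Q_{t-1}+\|\ell_t\|^2/S_t^2$, $\theta_t=\theta_{t-1}-\ell_t$. *)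

(* Defs.v *)
From HB Require Import structures.
From mathcomp Require Import all_boot all_order all_algebra.
From mathcomp Require Import all_classical all_reals all_analysis.
Set Implicit Arguments. Unset Strict Implicit. Unset Printing Implicit Defensive.
Import Order.TTheory GRing.Theory Num.Theory.
Local Open Scope classical_set_scope.
Local Open Scope ring_scope.

Section Defs.
Variable R : realType.

Definition enorm (d : nat) (v : 'rV[R]_d) : R :=
  Num.sqrt (\sum_(i < d) v 0 i ^+ 2).

Definition psistar (theta S Q : R) : R :=
  expR (sup [set theta * b - b ^+ 2 * S ^+ 2 | b in
               [set b : R | - (2^-1) <= b <= 2^-1]] - Q).

Definition psi (x S Q : R) : R :=
  sup [set theta * x - psistar theta S Q | theta in [set: R]].

Definition eta (G alpha : R) (t : nat) : R := (G * (t%:R `^ alpha))^-1.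

Definition ell (d : nat) (G alpha : R) (g : nat -> 'rV[R]_d) (t : nat) : 'rV[R]_d :=
  eta G alpha t *: g t.

Fixpoint SQ (d : nat) (G alpha : R) (g : nat -> 'rV[R]_d) (t : nat) : R * R :=
  match t with
  | 0%N => (4, 0)
  | t'.+1 =>
      let p := SQ G alpha g t' in
      let s2 := p.1 + enorm (ell G alpha g t) ^+ 2 in
      (s2, p.2 + enorm (ell G alpha g t) ^+ 2 / s2)
  end.

Definition S (d : nat) (G alpha : R) (g : nat -> 'rV[R]_d) (t : nat) : R :=
  Num.sqrt (SQ G alpha g t).1.
Definition Q (d : nat) (G alpha : R) (g : nat -> 'rV[R]_d) (t : nat) : R :=
  (SQ G alpha g t).2.

Definition phi (d : nat) (G alpha : R) (g : nat -> 'rV[R]_d) (t : nat)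
  (x : 'rV[R]_d) : R :=
  psi (enorm x) (S G alpha g t.-1) (Q G alpha g t.-1).

End Defs.

(* Main.v *)
Require Import Defs.
From HB Require Import structures.
From mathcomp Require Import all_boot all_order all_algebra.
From mathcomp Require Import all_classical all_reals all_analysis.
From mathcomp Require Import ring lra.
Import Order.TTheory GRing.Theory Num.Theory.
Local Open Scope ring_scope.

Section H.
Variable R : realType.

Lemma ln_le_sub1 (y : R) : 0 < y -> ln y <= y - 1.
Proof.
move=> hy; have := @le_ln1Dx R (y - 1).
have -> : 1 + (y - 1) = y by ring.
apply; lra.
Qed.

Lemma psistar_ge (th s q : R) :
  expR (th * 2^-1 - 2^-1 ^+ 2 * s ^+ 2 - q) <= psistar th s q.
Proof.
rewrite /psistar ler_expR lerD2r.
apply: sup_upper_bound; last by exists (2^-1) => //=; apply/andP; split; lra.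
split; first by exists (th * 2^-1 - 2^-1 ^+ 2 * s ^+ 2); exists (2^-1) => //=;
  apply/andP; split; lra.
exists `|th|; move=> y [b /andP [hb1 hb2] <-].
have h1 : th * b <= `|th|.
  by case: (lerP 0 th) => h; [rewrite ger0_norm // | rewrite ltr0_norm //]; nra.
have h2 : 0 <= b ^+ 2 * s ^+ 2 by rewrite mulr_ge0 // sqr_ge0.
lra.
Qed.

Lemma core (th x s q M : R) : 0 < x -> 0 <= s -> s <= M -> q <= ln M -> 1 <= M ->
  th * x - expR (th * 2^-1 - 2^-1 ^+ 2 * s - q) <=
  Num.sqrt M * x * (2 * ln (1 + 2 * x) + 9 * Num.sqrt M).
Proof.
move=> hx hs hsM hq hM.
set K := 2^-1 ^+ 2 * s + q.
have e : expR (th * 2^-1 - 2^-1 ^+ 2 * s - q) =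
         2 * x * expR (th * 2^-1 - K - ln (2 * x)).
  have h2x : 2 * x \in Num.pos by rewrite posrE; lra.
  by rewrite -{1}(lnK h2x) -expRD; congr expR; rewrite /K; ring.
rewrite e.
have := expR_ge1Dx (th * 2^-1 - K - ln (2 * x)) => hE.
have hL : ln (2 * x) <= ln (1 + 2 * x) by rewrite ler_ln ?posrE; lra.
have hL2 : 0 <= ln (1 + 2 * x) by apply: ln_ge0; lra.
have hm : 1 <= Num.sqrt M by rewrite -sqrtr1 ler_sqrt; lra.
have hmM : Num.sqrt M ^+ 2 = M by rewrite sqr_sqrtr //; lra.
have hlnM := @ln_le_sub1 M (lt_le_trans ltr01 hM).
have hK : K <= M * 2^-1 ^+ 2 + M - 1.
  rewrite /K; have : 2^-1 ^+ 2 * s <= 2^-1 ^+ 2 * M by rewrite ler_pM2l //; lra.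
  lra.
have p1 : 2 * x * (1 + (th * 2^-1 - K - ln (2 * x))) <=
          2 * x * expR (th * 2^-1 - K - ln (2 * x)) by rewrite ler_pM2l //; lra.
have p2 : x * ln (2 * x) <= x * ln (1 + 2 * x) by rewrite ler_pM2l.
have p3 : x * ln (1 + 2 * x) <= Num.sqrt M * (x * ln (1 + 2 * x)).
  by rewrite ler_peMl // mulr_ge0 //; lra.
have p4 : x * K <= x * (M * 2^-1 ^+ 2 + M - 1) by rewrite ler_pM2l.
have p5 : 0 <= x * Num.sqrt M ^+ 2 by rewrite mulr_ge0 //; lra.
rewrite -hmM in p4.
have p6 : th * x - 2 * x * expR (th * 2^-1 - K - ln (2 * x)) <=
   - 2 * x + 2 * (x * K) + 2 * (x * ln (2 * x)).
  have -> : - 2 * x + 2 * (x * K) + 2 * (x * ln (2 * x)) =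
    th * x - 2 * x * (1 + (th * 2^-1 - K - ln (2 * x))) by field.
  lra.
have -> : Num.sqrt M * x * (2 * ln (1 + 2 * x) + 9 * Num.sqrt M) =
  2 * (Num.sqrt M * (x * ln (1 + 2 * x))) + 9 * (x * Num.sqrt M ^+ 2) by ring.
have e4 : x * (Num.sqrt M ^+ 2 * 2^-1 ^+ 2 + Num.sqrt M ^+ 2 - 1) =
  (2^-1 ^+ 2 + 1) * (x * Num.sqrt M ^+ 2) - x by ring.
rewrite e4 in p4.
lra.
Qed.


Lemma psi_bound (x s q M : R) : 0 <= x -> 0 <= s -> s <= M -> q <= ln M -> 1 <= M ->
  psi x (Num.sqrt s) q <= Num.sqrt M * x * (2 * ln (1 + 2 * x) + 9 * Num.sqrt M).
Proof.
move=> hx hs hsM hq hM; rewrite /psi; apply: ge_sup.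
  by exists (0 * x - psistar 0 (Num.sqrt s) q); exists 0.
move=> y [th _ <-].
have h := psistar_ge th (Num.sqrt s) q.
rewrite sqr_sqrtr // in h.
have hb : th * x - expR (th * 2^-1 - 2^-1 ^+ 2 * s - q) <=
  Num.sqrt M * x * (2 * ln (1 + 2 * x) + 9 * Num.sqrt M).
  have [hx0|hx0] := eqVneq x 0.
    have := expR_gt0 (th * 2^-1 - 2^-1 ^+ 2 * s - q).
    rewrite hx0 !(mulr0, mul0r) add0r; lra.
  by apply: core => //; rewrite lt_neqAle eq_sym hx0 hx.
lra.
Qed.

Lemma tele (r a : R) : 0 < r -> 1 <= a ->
  expR (- (r + 1) * ln (a + 1)) <= (expR (- r * ln a) - expR (- r * ln (a + 1))) / r.
Proof.
move=> hr ha.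
set w1 := expR (- r * ln (a + 1)).
set u := ln (a + 1) - ln a.
have hu : (a + 1)^-1 <= u.
  have hpa : a \in Num.pos by rewrite posrE; lra.
  have hpa1 : a + 1 \in Num.pos by rewrite posrE; lra.
  have := @ln_le_sub1 (a / (a + 1)) (divr_gt0 (lt_le_trans ltr01 ha) (ltr_wpDl (le_trans ler01 ha) ltr01)).
  rewrite ln_div //.
  have -> : a / (a + 1) - 1 = - (a + 1)^-1 by field; lra.
  rewrite /u; lra.
have e1 : expR (- r * ln a) = w1 * expR (r * u) by rewrite /w1 -expRD /u; congr expR; ring.
have e2 : expR (- (r + 1) * ln (a + 1)) = w1 * (a + 1)^-1.
  have -> : - (r + 1) * ln (a + 1) = - r * ln (a + 1) + - ln (a + 1) by ring.
  by rewrite expRD expRN lnK // posrE; lra.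
rewrite e1 e2 ler_pdivlMr //.
have hw : 0 < w1 by apply: expR_gt0.
have h1 : w1 * (1 + r * u) <= w1 * expR (r * u) by rewrite ler_pM2l // expR_ge1Dx.
have h2 : w1 * (a + 1)^-1 * r <= w1 * r * u.
  by rewrite -mulrA [_^-1 * r]mulrC mulrA ler_pM2l // mulr_gt0.
have e3 : w1 * (1 + r * u) = w1 + w1 * r * u by ring.
rewrite e3 in h1.
lra.
Qed.

Lemma enorm_sq {d : nat} (v : 'rV[R]_d) : enorm v ^+ 2 = \sum_(i < d) v 0 i ^+ 2.
Proof. by rewrite /enorm sqr_sqrtr // sumr_ge0 // => i _; rewrite sqr_ge0. Qed.

Lemma enorm_ge0 {d : nat} (v : 'rV[R]_d) : 0 <= enorm v.
Proof. by rewrite /enorm sqrtr_ge0. Qed.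

Variables (d : nat) (G alpha : R) (g : nat -> 'rV[R]_d).
Hypotheses (hG : 0 < G) (halpha : 2^-1 < alpha)
  (hg : forall t : nat, (0 < t)%N -> enorm (g t) <= G).

Lemma ell_bound t : (0 < t)%N ->
  enorm (ell G alpha g t) ^+ 2 <= expR (- (2 * alpha) * ln t%:R).
Proof.
move=> ht0.
have e : enorm (ell G alpha g t) ^+ 2 = Defs.eta G alpha t ^+ 2 * enorm (g t) ^+ 2.
  rewrite !enorm_sq mulr_sumr; apply: eq_bigr => i _.
  by rewrite /ell mxE exprMn.
rewrite e.
have hgt := @hg t ht0.
have hn := enorm_ge0 (g t).
have hE : (t%:R : R) `^ alpha = expR (alpha * ln t%:R).
  by rewrite /powR ifF //; apply/negbTE; rewrite pnatr_eq0 -lt0n ht0.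
set E := expR (alpha * ln t%:R).
have hE0 : 0 < E by apply: expR_gt0.
have -> : expR (- (2 * alpha) * ln t%:R) = E^-1 * E^-1.
  by rewrite -expRN -expRD; congr expR; ring.
have e2 : Defs.eta G alpha t ^+ 2 * G ^+ 2 = E^-1 * E^-1.
  rewrite /Defs.eta hE -/E; field; apply/andP; split; rewrite gt_eqF //.
rewrite -e2 ler_wpM2l ?sqr_ge0 //.
by rewrite !expr2; nra.
Qed.

Definition w (T : nat) : R := expR (- (2 * alpha - 1) * ln T%:R).

Lemma SQ_ind T : 4 <= (SQ G alpha g T).1 /\
  (SQ G alpha g T).1 <= 5 + (1 - w T) / (2 * alpha - 1) /\
  (SQ G alpha g T).2 <= ln (SQ G alpha g T).1 - ln 4.
Proof.
have hr : 0 < 2 * alpha - 1.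
  have h2 : 2 * 2^-1 = 1 :> R by rewrite divff // pnatr_eq0.
  have := halpha; nra.
elim: T => [|T [IH1 [IH2 IH3]]].
  rewrite /= /w ln0 // mulr0 expR0 subrr mul0r addr0; split; lra.
rewrite /=.
set s := (SQ G alpha g T).1.
set qq := (SQ G alpha g T).2.
set a := enorm (ell G alpha g T.+1) ^+ 2.
have ha0 : 0 <= a by rewrite sqr_ge0.
have haB := @ell_bound T.+1 (ltn0Sn T); rewrite -/a in haB.
split; first lra.
split.
  case: T => [|T] in s qq a ha0 haB IH1 IH2 IH3 *.
    rewrite /w ln1 mulr0 expR0 subrr mul0r addr0.
    rewrite ln1 mulr0 expR0 in haB.
    move: IH2; rewrite /s /= => IH2; lra.
  have ht := @tele (2 * alpha - 1) (T.+1)%:R hr.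
  have eT : (T.+2)%:R = (T.+1)%:R + 1 :> R by rewrite natr1.
  rewrite eT in haB; rewrite /w eT.
  have h1 : 1 <= (T.+1)%:R :> R by rewrite ler1n.
  move: (ht h1); rewrite (_ : 2 * alpha - 1 + 1 = 2 * alpha); last by ring.
  move=> {}ht.
  move: IH2; rewrite /w => IH2.
  set w0 := expR (- (2 * alpha - 1) * ln (T.+1)%:R) in ht IH2 *.
  set w1 := expR (- (2 * alpha - 1) * ln ((T.+1)%:R + 1)) in ht *.
  have e5 : (1 - w1) / (2 * alpha - 1) = (1 - w0) / (2 * alpha - 1) + (w0 - w1) / (2 * alpha - 1) by ring.
  rewrite e5; lra.
have hs0 : 0 < s by lra.
have hsa : 0 < s + a by lra.
have hl := @ln_le_sub1 (s / (s + a)) (divr_gt0 hs0 hsa).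
rewrite ln_div ?posrE // in hl.
have e6 : s / (s + a) - 1 = - (a / (s + a)) by field; lra.
rewrite e6 in hl.
lra.
Qed.

End H.

Theorem lemma5 (R : realType) (d : nat) (G alpha : R) (g : nat -> 'rV[R]_d)
  (hG : 0 < G) (halpha : 2^-1 < alpha)
  (hg : forall t : nat, (0 < t)%N -> enorm (g t) <= G) :
  (forall T : nat,
      S G alpha g T <= Num.sqrt (5 + (2 * alpha - 1)^-1) /\
      Q G alpha g T <= ln (5 + (2 * alpha - 1)^-1)) /\
  (forall (T : nat) (u : 'rV[R]_d), (1 <= T)%N ->
      phi G alpha g T u <=
        Num.sqrt (5 + (2 * alpha - 1)^-1) * enorm u *
        (2 * ln (1 + 2 * enorm u) + 9 * Num.sqrt (5 + (2 * alpha - 1)^-1))).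
Proof.
have hr : 0 < 2 * alpha - 1.
  have h2 : 2 * 2^-1 = 1 :> R by rewrite divff // pnatr_eq0.
  have := halpha; nra.
set M := 5 + (2 * alpha - 1)^-1.
have hri : 0 < (2 * alpha - 1)^-1 by rewrite invr_gt0.
have hM : 5 <= M by rewrite /M; lra.
have key : forall T, (SQ G alpha g T).1 <= M /\ 4 <= (SQ G alpha g T).1 /\
    Q G alpha g T <= ln M.
  move=> T; have [h1 [h2 h3]] := @SQ_ind R d G alpha g hG halpha hg T.
  have hw : 0 < w R alpha T by apply: expR_gt0.
  have hwr : 0 < w R alpha T * (2 * alpha - 1)^-1 by rewrite mulr_gt0.
  have e : (1 - w R alpha T) / (2 * alpha - 1) =
    (2 * alpha - 1)^-1 - w R alpha T * (2 * alpha - 1)^-1 by ring.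
  rewrite e in h2.
  have hs : (SQ G alpha g T).1 <= M by rewrite /M; lra.
  split => //; split => //.
  have h4 : 0 <= ln (4 : R) by apply: ln_ge0; lra.
  have h5 : ln (SQ G alpha g T).1 <= ln M by rewrite ler_ln // posrE; lra.
  rewrite /Q; lra.
split.
  move=> T; have [h1 [h2 h3]] := key T; split => //.
  by rewrite /S ler_sqrt //; lra.
move=> T u hT; rewrite /phi /S.
have [h1 [h2 h3]] := key T.-1.
apply: psi_bound => //; first exact: enorm_ge0.
  lra.
lra.
Qed.
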